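(* Let $A=\{0,1,2\}$ and let $T\colon A^4\to A$ be given by $T(1,1,2,2)=T(1,2,1,2)=1$ and $T(\mathbf{x})=0$ for all other $\mathbf{x}\in A^4$. Let $g\in\{T\}^{*(1)*(2)}$. Then: (a) if $g(1,2)=2$ then $g(0,a)=a$ for all $a\in A$; (b) if $g(2,1)=2$ then $g(a,0)=a$ for all $a\in A$; (c) if $g(1,2)\in\{0,1\}$ then $g(0,a)=0$ for all $a\in A$; (d) if $g(2,1)\in\{0,1\}$ then $g(a,0)=0$ for all $a\in A$.
   Context: An $m$-ary $g$ commutes with an $n$-ary $h$ if $g\bigl((h((x_{ij})_{j}))_{i}\bigr)=h\bigl((g((x_{ij})_{i}))_{j}\bigr)$ for all $(x_{ij})\in A^{m\times n}$. For a set $F$ of finitary operations on $A$ (positive arity), $F^*$ is the set of all such operations commuting with every member of $F$, and $F^{(n)}$ is the set of $n$-ary members of $F$; superscripts apply from left to right, so $\{T\}^{*(1)*(2)}=(((\{T\}^* )^{(1)})^* )^{(2)}$. *)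

(* Defs.v *)
From mathcomp Require Import all_boot.
Set Implicit Arguments. Unset Strict Implicit. Unset Printing Implicit Defensive.

(* A finitary operation on A: an arity n together with a map A^n -> A
   (A^n represented as functions 'I_n -> A). *)
Definition op (A : Type) := {n : nat & ('I_n -> A) -> A}.

Definition mkop (A : Type) (n : nat) (f : ('I_n -> A) -> A) : op A :=
  existT (fun k => ('I_k -> A) -> A) n f.

Definition commutes (A : Type) (g h : op A) : Prop :=
  forall x : 'I_(projT1 g) -> 'I_(projT1 h) -> A,
    projT2 g (fun i => projT2 h (x i)) = projT2 h (fun j => projT2 g (fun i => x i j)).

Definition star (A : Type) (F : op A -> Prop) : op A -> Prop :=
  fun g => 0 < projT1 g /\ forall h, F h -> commutes g h.

Definition arity_part (A : Type) (F : op A -> Prop) (n : nat) : op A -> Prop :=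
  fun g => F g /\ projT1 g = n.

Definition A3 := 'I_3.

Definition T (x : 'I_4 -> A3) : A3 :=
  if [&& val (x (inord 0)) == 1, val (x (inord 1)) == 1,
         val (x (inord 2)) == 2 & val (x (inord 3)) == 2]
  || [&& val (x (inord 0)) == 1, val (x (inord 1)) == 2,
         val (x (inord 2)) == 1 & val (x (inord 3)) == 2]
  then inord 1 else inord 0.

Definition singletonT : op A3 -> Prop := fun h => h = mkop T.

Definition clone_T12 : op A3 -> Prop :=
  arity_part (star (arity_part (star singletonT) 1)) 2.

Definition pair2 (a b : A3) : 'I_2 -> A3 := fun i => if val i == 0 then a else b.

Definition e (k : nat) : A3 := inord k.

(* Main.v *)
From Stdlib Require Import FunctionalExtensionality.
Require Import Defs.
From mathcomp Require Import all_boot.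

Definition u1 (f : A3 -> A3) : op A3 := mkop (fun x : 'I_1 -> A3 => f (x ord0)).

Definition o0 : A3 := @Ordinal 3 0 isT.
Definition o1 : A3 := @Ordinal 3 1 isT.
Definition o2 : A3 := @Ordinal 3 2 isT.

Lemma e0o : e 0 = o0. Proof. by apply: val_inj; rewrite /= /e inordK. Qed.
Lemma e1o : e 1 = o1. Proof. by apply: val_inj; rewrite /= /e inordK. Qed.
Lemma e2o : e 2 = o2. Proof. by apply: val_inj; rewrite /= /e inordK. Qed.

Definition c0 (a : A3) : A3 := o0.
Definition f2 (a : A3) : A3 := if val a == 2 then o1 else o0.
Definition f3 (a : A3) : A3 := if val a == 2 then o2 else o0.

Definition Tn (a b c d : A3) : A3 :=
  if [&& val a == 1, val b == 1, val c == 2 & val d == 2]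
  || [&& val a == 1, val b == 2, val c == 1 & val d == 2] then o1 else o0.

Lemma TE x : T x = Tn (x (inord 0)) (x (inord 1)) (x (inord 2)) (x (inord 3)).
Proof. by rewrite /T /Tn; case: ifP => _; apply: val_inj; rewrite /= inordK. Qed.

Lemma commT (f : A3 -> A3) :
  (forall a0 a1 a2 a3 : A3, f (Tn a0 a1 a2 a3) = Tn (f a0) (f a1) (f a2) (f a3)) ->
  commutes (u1 f) (mkop T).
Proof. by move=> H x /=; rewrite !TE H. Qed.

Ltac solveT := do 4 case=> [[|[|[|?]]] ?] //.

Lemma c0T : commutes (u1 c0) (mkop T). Proof. apply: commT; solveT. Qed.
Lemma f2T : commutes (u1 f2) (mkop T). Proof. apply: commT; solveT. Qed.
Lemma f3T : commutes (u1 f3) (mkop T). Proof. apply: commT; solveT. Qed.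

Lemma A3_cases (a : A3) : [\/ a = o0, a = o1 | a = o2].
Proof.
case: a => [[|[|[|m]]] Hm].
- by apply: Or31; apply: val_inj.
- by apply: Or32; apply: val_inj.
- by apply: Or33; apply: val_inj.
- by [].
Qed.

Lemma gcomm (g : ('I_2 -> A3) -> A3) (f : A3 -> A3) :
  commutes (mkop g) (u1 f) -> forall a b, g (pair2 (f a) (f b)) = f (g (pair2 a b)).
Proof.
move=> H a b; have := H (fun i _ => pair2 a b i) => /= <-.
congr g; apply: functional_extensionality => i; rewrite /pair2; by case: ifP.
Qed.

Lemma u1_in (f : A3 -> A3) : commutes (u1 f) (mkop T) ->
  arity_part (star singletonT) 1 (u1 f).
Proof. by move=> H; split => //; split => // h ->. Qed.

Theorem lemma3p9 (g : ('I_2 -> A3) -> A3) :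
  clone_T12 (mkop g) ->
  [/\ (g (pair2 (e 1) (e 2)) = e 2 -> forall a : A3, g (pair2 (e 0) a) = a),
      (g (pair2 (e 2) (e 1)) = e 2 -> forall a : A3, g (pair2 a (e 0)) = a),
      (g (pair2 (e 1) (e 2)) \in [:: e 0; e 1] -> forall a : A3, g (pair2 (e 0) a) = e 0)
    & (g (pair2 (e 2) (e 1)) \in [:: e 0; e 1] -> forall a : A3, g (pair2 a (e 0)) = e 0)].
Proof.
case=> [[_ H] _].
have K0 := @gcomm g _ (H _ (@u1_in _ c0T)).
have K2 := @gcomm g _ (H _ (@u1_in _ f2T)).
have K3 := @gcomm g _ (H _ (@u1_in _ f3T)).
have G00 : g (pair2 o0 o0) = o0 by rewrite -[pair2 o0 o0]/(pair2 (c0 o0) (c0 o0)) K0.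
rewrite e0o e1o e2o; split.
- move=> E a; case: (A3_cases a) => ->; first exact: G00.
  + by rewrite -[pair2 o0 o1]/(pair2 (f2 o1) (f2 o2)) K2 E.
  + by rewrite -[pair2 o0 o2]/(pair2 (f3 o1) (f3 o2)) K3 E.
- move=> E a; case: (A3_cases a) => ->; first exact: G00.
  + by rewrite -[pair2 o1 o0]/(pair2 (f2 o2) (f2 o1)) K2 E.
  + by rewrite -[pair2 o2 o0]/(pair2 (f3 o2) (f3 o1)) K3 E.
- move=> E a; case: (A3_cases a) => ->; first exact: G00.
  + rewrite -[pair2 o0 o1]/(pair2 (f2 o1) (f2 o2)) K2.
    by move: E; case: (A3_cases (g (pair2 o1 o2))) => ->.
  + rewrite -[pair2 o0 o2]/(pair2 (f3 o1) (f3 o2)) K3.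
    by move: E; case: (A3_cases (g (pair2 o1 o2))) => ->.
- move=> E a; case: (A3_cases a) => ->; first exact: G00.
  + rewrite -[pair2 o1 o0]/(pair2 (f2 o2) (f2 o1)) K2.
    by move: E; case: (A3_cases (g (pair2 o2 o1))) => ->.
  + rewrite -[pair2 o2 o0]/(pair2 (f3 o2) (f3 o1)) K3.
    by move: E; case: (A3_cases (g (pair2 o2 o1))) => ->.
Qed.
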